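(* Let $A,B$ be nonempty persistence diagrams, $d_0=\min\{d_\infty(A,B),d_\infty(D_0,B)\}$, $\Theta(c)=d_\infty(cA,B)$, and let $b^{(m)}=(b^{(m)}_x,b^{(m)}_y)$ be a point of $\chi(B)$ with the largest $y$-coordinate among points of $\chi(B)$. Then: (i) if $0\le c\le \dfrac{b^{(m)}_y-d_0}{\mathrm{bd}(A)}$, then $\Theta(c)\ge d_0$; (ii) if $0\le c\le \min\Big\{\dfrac{b^{(m)}_y+b^{(m)}_x}{2\,\mathrm{bd}(A)},\ \dfrac{\mathrm{pers}(B)}{\mathrm{pers}(A)}\Big\}$, then $\Theta(c)=\mathrm{pers}(B)$.
   Context: A persistence diagram is a finite multiset of points $a=(a_x,a_y)$ with $0\le a_x<a_y<\infty$ together with the diagonal $\Delta$ of infinite multiplicity; nonempty means it has at least one such point. $D_0$ is the empty diagram. $d_\infty$ is the bottleneck distance (infimum over multi-bijections between $A\cup\Delta$ and $B\cup\Delta$ of the maximal $\ell^\infty$ distance; matching $a$ to $\Delta$ costs $\mathrm{pers}(a)$). $cA=\{(ca_x,ca_y)\}$ for $c>0$, $0A=D_0$. $\mathrm{pers}(a)=(a_y-a_x)/2$; $\mathrm{pers}(A)=\max_{a\in A}\mathrm{pers}(a)$; $\chi(A)$ is the multiset of points of $A$ with persistence equal to $\mathrm{pers}(A)$; $\mathrm{bd}(A)=\max_{a\in A}a_y$. *)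

(* Defs.v *)
From HB Require Import structures.
From mathcomp Require Import all_boot all_order all_algebra.
From mathcomp Require Import reals.
Set Implicit Arguments. Unset Strict Implicit. Unset Printing Implicit Defensive.
Import Order.TTheory GRing.Theory Num.Theory.
Local Open Scope ring_scope.

Section PD.
Variable R : realType.

(* A point of the plane; a persistence diagram is a finite multiset of
   off-diagonal points, represented as a list (multiplicities = repetitions). *)
Definition pt := (R * R)%type.

Definition is_diagram (A : seq pt) : bool :=
  all (fun a => (0 <= a.1) && (a.1 < a.2)) A.

Definition linf (a b : pt) : R := Num.max `|a.1 - b.1| `|a.2 - b.2|.

(* persistence of a point: its l^infty distance to the diagonal *)
Definition pers (a : pt) : R := (a.2 - a.1) / 2.

Definition persD (A : seq pt) : R := \big[Num.max/0]_(a <- A) pers a.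

Definition bd (A : seq pt) : R := \big[Num.max/0]_(a <- A) a.2.

Definition scaleD (c : R) (A : seq pt) : seq pt :=
  if c == 0 then [::] else [seq (c * a.1, c * a.2) | a <- A].

Definition D0 : seq pt := [::].

(* A multi-bijection between A ∪ Δ and B ∪ Δ is (up to diagonal-to-diagonal
   pairs, which cost 0, and matching to the nearest diagonal point, which
   realises the infimum pers(a)) a partial injective matching between the
   off-diagonal points of A and B. *)
Definition matching (A B : seq pt) := {ffun 'I_(size A) -> option 'I_(size B)}.

Definition valid_matching A B (f : matching A B) : bool :=
  [forall i, forall j, ((f i != None) && (f i == f j)) ==> (i == j)].

Definition matching_cost A B (f : matching A B) : R :=
  Num.max
    (\big[Num.max/0]_(i : 'I_(size A))
        match f i with
        | Some j => linf (nth (0, 0) A i) (nth (0, 0) B j)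
        | None => pers (nth (0, 0) A i)
        end)
    (\big[Num.max/0]_(j : 'I_(size B) | [forall i, f i != Some j])
        pers (nth (0, 0) B j)).

Definition empty_matching A B : matching A B := [ffun => None].

(* bottleneck distance: minimum (= infimum, finitely many matchings) of the
   cost over all partial matchings *)
Definition bottleneck (A B : seq pt) : R :=
  \big[Num.min/matching_cost (empty_matching A B)]_(f : matching A B | valid_matching f)
     matching_cost f.

End PD.

(* Main.v *)
Require Import Defs.
From HB Require Import structures.
From mathcomp Require Import all_boot all_order all_algebra.
From mathcomp Require Import reals.
From mathcomp.algebra_tactics Require Import lra.
Import Order.TTheory GRing.Theory Num.Theory.
Local Open Scope ring_scope.

Section Aux.
Variable R : realType.

Lemma bigmax_leX (I : eqType) (r : seq I) (P : pred I) (F : I -> R) (X : R) :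
  0 <= X -> (forall i, P i -> F i <= X) -> \big[Num.max/0]_(i <- r | P i) F i <= X.
Proof.
move=> X0 HF; apply: (big_ind (fun x => x <= X)) => //.
by move=> x y Hx Hy; rewrite ge_max Hx Hy.
Qed.

Lemma le_bigmaxX (I : eqType) (r : seq I) (P : pred I) (F : I -> R) (i : I) :
  i \in r -> P i -> F i <= \big[Num.max/0]_(k <- r | P k) F k.
Proof.
elim: r => [//|k r IH]; rewrite in_cons big_cons => /orP [/eqP <-|Hr] Pi.
  by rewrite Pi le_max lexx.
case: (P k); last exact: IH.
by rewrite le_max IH // orbT.
Qed.

Lemma bottleneck_ge (A B : seq (pt R)) (m : R) :
  (forall f : matching A B, m <= matching_cost f) -> m <= bottleneck A B.
Proof.
move=> H; rewrite /bottleneck; apply: (big_ind (fun x => m <= x)) => //.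
by move=> x y Hx Hy; rewrite le_min Hx Hy.
Qed.

Lemma bottleneck_le_empty (A B : seq (pt R)) :
  bottleneck A B <= matching_cost (empty_matching A B).
Proof.
rewrite /bottleneck; elim: index_enum => [|k r IH]; first by rewrite big_nil.
rewrite big_cons; case: (valid_matching k) => //.
by rewrite ge_min IH orbT.
Qed.

Lemma empty_cost_le (A B : seq (pt R)) (X : R) :
  0 <= X -> (forall a, a \in A -> pers a <= X) -> (forall b, b \in B -> pers b <= X) ->
  matching_cost (empty_matching A B) <= X.
Proof.
move=> X0 HA HB; rewrite /matching_cost ge_max; apply/andP; split.
  apply: bigmax_leX => // i _; rewrite ffunE; apply: HA; exact: mem_nth.
apply: bigmax_leX => // j _; apply: HB; exact: mem_nth.
Qed.

Lemma cost_ge (A B : seq (pt R)) (bm : pt R) (M : R) (f : matching A B) :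
  bm \in B -> (forall a, a \in A -> a.2 <= M) ->
  Num.min (pers bm) (bm.2 - M) <= matching_cost f.
Proof.
move=> Hbm HM.
have Hj : (index bm B < size B)%N by rewrite index_mem.
pose j := Ordinal Hj.
have Ej : nth (0,0) B j = bm by rewrite /= nth_index.
rewrite /matching_cost.
case: (pickP (fun i => f i == Some j)) => [i /eqP Hi|Hn].
  rewrite le_max; apply/orP; left.
  apply: le_trans; last first.
    apply: (@le_bigmaxX _ _ _ (fun i => match f i with
        | Some j => linf (nth (0, 0) A i) (nth (0, 0) B j)
        | None => pers (nth (0, 0) A i) end) i) => //.
  rewrite /= Hi Ej /linf.
  have HaM : (nth (0,0) A i).2 <= M by apply: HM; apply: mem_nth.
  rewrite ge_min; apply/orP; right.
  rewrite le_max; apply/orP; right.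
  rewrite distrC; apply: le_trans (ler_norm _).
  by rewrite lerB.
rewrite le_max; apply/orP; right.
apply: le_trans; last first.
  apply: (@le_bigmaxX _ (index_enum _) (fun j => [forall i, f i != Some j]) (fun j => pers (nth (0, 0) B j)) j) => //.
  by apply/forallP => i; rewrite Hn.
by rewrite /= Ej ge_min lexx.
Qed.

End Aux.

Theorem mainTheorem6 (R : realType) (A B : seq (pt R)) (bm : pt R) :
  is_diagram A -> is_diagram B -> A != [::] -> B != [::] ->
  bm \in B -> pers bm = persD B ->
  (forall b, b \in B -> pers b = persD B -> b.2 <= bm.2) ->
  let d0 := Num.min (bottleneck A B) (bottleneck (D0 R) B) in
  let Theta := fun c : R => bottleneck (scaleD c A) B in
  (forall c : R, 0 <= c -> c <= (bm.2 - d0) / bd A -> d0 <= Theta c) /\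
  (forall c : R, 0 <= c ->
     c <= Num.min ((bm.2 + bm.1) / (2 * bd A)) (persD B / persD A) ->
     Theta c = persD B).
Proof.
move=> dA dB nA nB Hbm Pbm _ d0 Theta.
have [a0 Ha0] : exists a, a \in A by exists (nth (0,0) A 0); apply: mem_nth; rewrite lt0n size_eq0.
have Ha0' : (0 <= a0.1) && (a0.1 < a0.2) by exact: (allP dA).
case/andP: Ha0' => H1 H2.
have bdge : forall a, a \in A -> a.2 <= bd A.
  by move=> a Ha; rewrite /bd; apply: (@le_bigmaxX _ _ _ (fun _ => true) (fun a : pt R => a.2)) => //.
have persge : forall a, a \in A -> pers a <= persD A.
  by move=> a Ha; rewrite /persD; apply: (@le_bigmaxX _ _ _ (fun _ => true) (fun a : pt R => pers a)) => //.
have bdpos : 0 < bd A by apply: lt_le_trans (bdge _ Ha0); apply: le_lt_trans H2.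
have perspos : 0 < persD A.
  apply: lt_le_trans (persge _ Ha0); rewrite /pers divr_gt0 // subr_gt0 //.
have persB0 : 0 <= persD B.
  rewrite -Pbm /pers; case/andP: (allP dB _ Hbm) => _ h; apply: divr_ge0 => //; rewrite subr_ge0 ltW //.
have sc2 : forall c, 0 <= c -> forall a, a \in scaleD c A -> a.2 <= c * bd A.
  move=> c c0 a; rewrite /scaleD; case: eqP => // _ /mapP [x Hx ->] /=.
  by rewrite ler_wpM2l // bdge.
have lowb : forall c, 0 <= c -> Num.min (pers bm) (bm.2 - c * bd A) <= Theta c.
  move=> c c0; apply: bottleneck_ge => f; apply: cost_ge => //; exact: sc2.
split.
  move=> c c0 Hc.
  apply: le_trans _ (lowb c c0).
  rewrite le_min; apply/andP; split.
    rewrite Pbm /d0 ge_min; apply/orP; right.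
    apply: le_trans (bottleneck_le_empty _ _ _) _.
    apply: empty_cost_le => // b Hb.
    rewrite /persD; apply: (@le_bigmaxX _ _ _ (fun _ => true) (fun a : pt R => pers a)) => //.
  move: Hc; rewrite ler_pdivlMr // => Hc; lra.
move=> c c0; rewrite le_min => /andP [Hc1 Hc2].
apply/eqP; rewrite eq_le; apply/andP; split.
  apply: le_trans (bottleneck_le_empty _ _ _) _.
  apply: empty_cost_le => //.
    move=> a; rewrite /scaleD; case: eqP => // _ /mapP [x Hx ->].
    rewrite /pers /= -mulrBr -mulrA.
    apply: le_trans (_ : c * persD A <= _).
      by rewrite ler_wpM2l // persge.
    by rewrite -ler_pdivlMr.
  by move=> b Hb; rewrite /persD; apply: (@le_bigmaxX _ _ _ (fun _ => true) (fun a : pt R => pers a)) => //.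
rewrite -Pbm; apply: le_trans _ (lowb c c0).
rewrite le_min lexx /=.
have : c * bd A <= (bm.2 + bm.1) / 2.
  by move: Hc1; rewrite invfM mulrA ler_pdivlMr // mulrAC -ler_pdivlMr.
rewrite /pers => H; lra.
Qed.
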